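(* Suppose there is $D>0$ such that for all $\alpha\in(0,\alpha_{\max})$ $$\sum_{\lambda_i\le\alpha}|\langle x^\dagger,u_i\rangle|^2\le D\sum_{\lambda_i\ge\alpha}\frac{\alpha}{\lambda_i}|\langle x^\dagger,u_i\rangle|^2.$$ Then there is a constant $C$ depending only on $D$ (e.g. $C=\sqrt{8(D+1)}$) such that for all $\alpha\in(0,\alpha_{\max})$ $$\|x_\alpha-x^\dagger\|\le C\,\psi_{SL}(\alpha,x^\dagger).$$
   Context: Let $X,Y$ be real Hilbert spaces and $A:X\to Y$ a compact linear operator with singular system $(\sigma_i,u_i,v_i)_i$, $\sigma_i>0$; put $\lambda_i=\sigma_i^2$. Let $x^\dagger\in N(A)^\perp$, $y=Ax^\dagger$, $x_\alpha=(A^*A+\alpha I)^{-1}A^*y$, $\alpha_{\max}>0$ fixed, and $\psi_{SL}(\alpha,x^\dagger):=\Big(\sum_i\frac{\alpha\lambda_i^2}{(\lambda_i+\alpha)^3}|\langle x^\dagger,u_i\rangle|^2\Big)^{1/2}$. *)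

(* Defs.v *)
From Stdlib Require Import Reals.
Open Scope R_scope.

(* The singular system is indexed by nat:  lam i = sigma_i^2 > 0,
   c i = <x^dagger, u_i>.  Since x^dagger lies in N(A)^perp = closed span
   of the u_i, x^dagger = sum_i c i u_i with sum_i (c i)^2 < infinity. *)

(* coefficients <x_alpha, u_i> of the Tikhonov solution
   x_alpha = (A^*A + alpha I)^{-1} A^* A x^dagger *)
Definition xalpha_coef (lam c : nat -> R) (alpha : R) (i : nat) : R :=
  lam i / (lam i + alpha) * c i.

(* terms of ||x_alpha - x^dagger||^2 = sum_i |<x_alpha - x^dagger, u_i>|^2 *)
Definition err_term (lam c : nat -> R) (alpha : R) (i : nat) : R :=
  (xalpha_coef lam c alpha i - c i) ^ 2.

(* terms of psi_SL(alpha, x^dagger)^2 *)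
Definition psiSL_term (lam c : nat -> R) (alpha : R) (i : nat) : R :=
  alpha * lam i ^ 2 / (lam i + alpha) ^ 3 * (c i) ^ 2.

Definition low_term (lam c : nat -> R) (alpha : R) (i : nat) : R :=
  if Rle_dec (lam i) alpha then (c i) ^ 2 else 0.

Definition high_term (lam c : nat -> R) (alpha : R) (i : nat) : R :=
  if Rle_dec alpha (lam i) then alpha / lam i * (c i) ^ 2 else 0.

(* Main.v *)
Require Import Defs.
From Stdlib Require Import Reals Lra.
Open Scope R_scope.

Lemma cv_const (k : R) : Un_cv (fun _ => k) k.
Proof. intros e He; exists 0%nat; intros n _. rewrite Rdist_eq; lra. Qed.

Lemma Rdiv_le_1 a b : 0 < b -> a <= b -> a / b <= 1.
Proof. intros Hb Hab. apply Rmult_le_reg_r with b; auto.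
  unfold Rdiv. rewrite Rmult_assoc, Rinv_l by lra. lra. Qed.

Lemma Rdiv_le_0_compat a b : 0 <= a -> 0 < b -> 0 <= a / b.
Proof. intros. apply Rmult_le_pos; auto. apply Rlt_le, Rinv_0_lt_compat; auto. Qed.

Lemma err_eq lam c a i : 0 < lam i -> 0 < a ->
  err_term lam c a i = (a / (lam i + a)) ^ 2 * c i ^ 2.
Proof. intros Hl Ha. unfold err_term, xalpha_coef. field. lra. Qed.

Lemma err_le lam c a i : 0 < lam i -> 0 < a ->
  err_term lam c a i <= low_term lam c a i + 8 * psiSL_term lam c a i.
Proof.
  intros Hl Ha. rewrite err_eq by auto. unfold low_term, psiSL_term.
  set (l := lam i) in *. set (x := c i) in *.
  assert (Hx : 0 <= x ^ 2) by nra.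
  assert (Hq : 0 < a / (l + a) <= 1).
  { split. apply Rdiv_lt_0_compat; lra. apply Rdiv_le_1; lra. }
  assert (Hp : 0 <= a * l ^ 2 / (l + a) ^ 3 * x ^ 2).
  { apply Rmult_le_pos; [|auto]. apply Rdiv_le_0_compat; [nra|].
    apply pow_lt; lra. }
  destruct (Rle_dec l a).
  - destruct Hq as [Hq1 Hq2]. assert ((a / (l + a)) ^ 2 <= 1) by (simpl; nra). nra.
  - assert (E : (a / (l + a)) ^ 2 * x ^ 2 <= 8 * (a * l ^ 2 / (l + a) ^ 3 * x ^ 2)).
    { replace ((a / (l + a)) ^ 2 * x ^ 2) with ((a^2 * (l+a)) / (l+a)^3 * x^2) by (field; lra).
      rewrite <- Rmult_assoc. apply Rmult_le_compat_r; auto.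
      unfold Rdiv. rewrite <- Rmult_assoc. apply Rmult_le_compat_r.
      { apply Rlt_le, Rinv_0_lt_compat, pow_lt; lra. }
      apply Rnot_le_lt in n.
      assert (a * l <= l * l) by nra. assert (a * a <= l * l) by nra.
      simpl. nra. }
    lra.
Qed.

Lemma high_le lam c a i : 0 < lam i -> 0 < a ->
  0 <= high_term lam c a i <= 8 * psiSL_term lam c a i.
Proof.
  intros Hl Ha. unfold high_term, psiSL_term.
  set (l := lam i) in *. set (x := c i) in *.
  assert (Hx : 0 <= x ^ 2) by nra.
  assert (Hp : 0 <= a * l ^ 2 / (l + a) ^ 3 * x ^ 2).
  { apply Rmult_le_pos; [|auto]. apply Rdiv_le_0_compat; [nra|].
    apply pow_lt; lra. }
  destruct (Rle_dec a l).
  - split. apply Rmult_le_pos; auto. apply Rdiv_le_0_compat; lra.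
    rewrite <- Rmult_assoc. apply Rmult_le_compat_r; auto.
    apply Rmult_le_reg_r with (l * (l + a) ^ 3).
    { apply Rmult_lt_0_compat; [lra|apply pow_lt; lra]. }
    replace (a / l * (l * (l + a) ^ 3)) with (a * (l+a)^3) by (field; lra).
    replace (8 * (a * l ^ 2 / (l + a) ^ 3) * (l * (l + a) ^ 3)) with (8 * a * l^3)
      by (field; lra).
    assert ((l+a)^3 <= 8 * l^3).
    { replace (8 * l^3) with ((2*l)^3) by ring. apply pow_incr; lra. }
    nra.
  - lra.
Qed.

Lemma low_bounds lam c a i : 0 <= low_term lam c a i <= c i ^ 2.
Proof. unfold low_term. destruct (Rle_dec _ _); nra. Qed.

Lemma high_bounds lam c a i : 0 < lam i -> 0 < a -> 0 <= high_term lam c a i <= c i ^ 2.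
Proof.
  intros Hl Ha. unfold high_term. destruct (Rle_dec _ _); [|nra].
  assert (0 < a / lam i <= 1).
  { split. apply Rdiv_lt_0_compat; lra. apply Rdiv_le_1; lra. }
  nra.
Qed.

Theorem mainTheorem6 :
  forall D : R, 0 < D ->
  exists C : R, 0 < C /\
  forall (alpha_max : R) (lam c : nat -> R),
    0 < alpha_max ->
    (forall i, 0 < lam i) ->
    (exists S, infinite_sum (fun i => (c i) ^ 2) S) ->
    (forall alpha, 0 < alpha < alpha_max ->
       forall Slow Shigh,
         infinite_sum (low_term lam c alpha) Slow ->
         infinite_sum (high_term lam c alpha) Shigh ->
         Slow <= D * Shigh) ->
    forall alpha, 0 < alpha < alpha_max ->
      forall E P,
        infinite_sum (err_term lam c alpha) E ->
        infinite_sum (psiSL_term lam c alpha) P ->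
        sqrt E <= C * sqrt P.
Proof.
  intros D HD. exists (sqrt (8 * (D + 1))). split.
  { apply sqrt_lt_R0. lra. }
  intros am lam c Ham Hl [S HS] Hcond a Ha E P HE HP.
  assert (Ha0 : 0 < a) by lra.
  destruct (Rseries_CV_comp (low_term lam c a) (fun i => c i ^ 2)
             (fun n => low_bounds lam c a n) (exist _ S HS)) as [Sl HSl].
  destruct (Rseries_CV_comp (high_term lam c a) (fun i => c i ^ 2)
             (fun n => high_bounds lam c a n (Hl n) Ha0) (exist _ S HS)) as [Sh HSh].
  assert (H1 : Sl <= D * Sh) by (apply (Hcond a Ha); assumption).
  assert (H2 : Sh <= 8 * P).
  { apply (Rle_cv_lim (Un := fun n => sum_f_R0 (high_term lam c a) n)
                      (Vn := fun n => 8 * sum_f_R0 (psiSL_term lam c a) n)).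
    - intro n. rewrite scal_sum. apply sum_growing. intro k.
      rewrite Rmult_comm. apply high_le; auto.
    - exact HSh.
    - apply CV_mult. apply cv_const. exact HP. }
  assert (H3 : E <= Sl + 8 * P).
  { apply (Rle_cv_lim (Un := fun n => sum_f_R0 (err_term lam c a) n)
                      (Vn := fun n => sum_f_R0 (low_term lam c a) n + 8 * sum_f_R0 (psiSL_term lam c a) n)).
    - intro n. rewrite scal_sum, <- sum_plus. apply sum_growing. intro k.
      rewrite (Rmult_comm (psiSL_term _ _ _ _)). apply err_le; auto.
    - exact HE.
    - apply CV_plus. exact HSl. apply CV_mult. apply cv_const. exact HP. }
  assert (HP0 : 0 <= P).
  { apply (Rle_cv_lim (Un := fun _ => 0) (Vn := fun n => sum_f_R0 (psiSL_term lam c a) n)).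
    - intro n. apply cond_pos_sum. intro k. pose proof (high_le lam c a k (Hl k) Ha0). lra.
    - apply cv_const.
    - exact HP. }
  rewrite <- sqrt_mult_alt by lra.
  apply sqrt_le_1_alt.
  assert (D * Sh <= D * (8 * P)) by (apply Rmult_le_compat_l; lra).
  nra.
Qed.
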